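(* Let $R$ be a ring. \begin{enumerate} \item Every Ore set of $R$ is a localizable set of $R$. \item If $S$ is an Ore set of $R$, then $S$ is localizable with $\mathrm{ass}_R(S)=\mathfrak{a}$, where $\mathfrak{a}=\{r\in R: srt=0\text{ for some } s,t\in S\}$, and $R\langle S^{-1}\rangle$ is $R$-isomorphic to the Ore localization $\overline{S}^{-1}\overline{R}$, where $\overline{R}=R/\mathfrak{a}$ and $\overline{S}$ is the image of $S$ in $\overline{R}$ (a denominator set of $\overline{R}$). \end{enumerate}
   Context: Rings are associative with $1$. Multiplicative set: $SS\subseteq S$, $1\in S$, $0\notin S$. Ore set: $Sr\cap Rs\neq\emptyset$ and $rS\cap sR\neq\emptyset$ for all $r\in R,s\in S$. $R\langle S^{-1}\rangle=R\langle X_S\rangle/I_S$, where $R\langle X_S\rangle$ is freely generated by $R$ and noncommuting indeterminates $x_s$ ($s\in S$) and $I_S$ is generated by $sx_s-1,x_ss-1$; $\mathrm{ass}_R(S)=\ker(R\to R\langle S^{-1}\rangle)$. $S$ is localizable if $R\langle S^{-1}\rangle\ne0$ and every element is both of the form $(x_s+I_S)(r+I_S)$ and of the form $(r'+I_S)(x_{s'}+I_S)$, $s,s'\in S$, $r,r'\in R$. *)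

(* Defs.v *)
From HB Require Import structures.
From mathcomp Require Import all_boot all_order all_algebra.
Set Implicit Arguments. Unset Strict Implicit. Unset Printing Implicit Defensive.
Import GRing.Theory.
Local Open Scope ring_scope.

(* Rings: associative with 1 (pzRingType, the zero ring is not excluded). *)

Definition multiplicative_set (R : pzRingType) (S : R -> Prop) : Prop :=
  [/\ S 1, ~ S 0 & forall s t, S s -> S t -> S (s * t)].

Definition ore_set (R : pzRingType) (S : R -> Prop) : Prop :=
  multiplicative_set S /\
  forall r s, S s ->
    (exists s' r', S s' /\ s' * r = r' * s) /\
    (exists s' r', S s' /\ r * s' = s * r').

(* Terms of the free ring R<X_S> generated by (the ring) R and
   noncommuting indeterminates x_s, s ∈ S. *)
Inductive lterm (R : pzRingType) (S : R -> Prop) : Type :=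
| LC of R
| LX of {s : R | S s}
| LAdd of lterm S & lterm S
| LOpp of lterm S
| LMul of lterm S & lterm S.

Arguments LX {R S}.

(* The congruence on terms whose quotient is R<S^{-1}> = R<X_S>/I_S :
   ring axioms, the ring structure of R, and the relations
   s x_s = 1, x_s s = 1 generating I_S. *)
Inductive lrel (R : pzRingType) (S : R -> Prop) : lterm S -> lterm S -> Prop :=
| lrel_refl t : lrel t t
| lrel_sym t u : lrel t u -> lrel u t
| lrel_trans t u v : lrel t u -> lrel u v -> lrel t v
| lrel_add t t' u u' : lrel t t' -> lrel u u' -> lrel (LAdd t u) (LAdd t' u')
| lrel_opp t t' : lrel t t' -> lrel (LOpp t) (LOpp t')
| lrel_mul t t' u u' : lrel t t' -> lrel u u' -> lrel (LMul t u) (LMul t' u')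
| lrel_addA t u v : lrel (LAdd t (LAdd u v)) (LAdd (LAdd t u) v)
| lrel_addC t u : lrel (LAdd t u) (LAdd u t)
| lrel_add0 t : lrel (LAdd (LC S 0) t) t
| lrel_addN t : lrel (LAdd (LOpp t) t) (LC S 0)
| lrel_mulA t u v : lrel (LMul t (LMul u v)) (LMul (LMul t u) v)
| lrel_mul1l t : lrel (LMul (LC S 1) t) t
| lrel_mul1r t : lrel (LMul t (LC S 1)) t
| lrel_mulDl t u v : lrel (LMul (LAdd t u) v) (LAdd (LMul t v) (LMul u v))
| lrel_mulDr t u v : lrel (LMul t (LAdd u v)) (LAdd (LMul t u) (LMul t v))
| lrel_Cadd a b : lrel (LAdd (LC S a) (LC S b)) (LC S (a + b))
| lrel_Cmul a b : lrel (LMul (LC S a) (LC S b)) (LC S (a * b))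
| lrel_invl (s : {s : R | S s}) : lrel (LMul (LC S (sval s)) (LX s)) (LC S 1)
| lrel_invr (s : {s : R | S s}) : lrel (LMul (LX s) (LC S (sval s))) (LC S 1).

(* ass_R(S) = ker (R -> R<S^{-1}>) *)
Definition ass (R : pzRingType) (S : R -> Prop) : R -> Prop :=
  fun r => lrel (LC S r) (LC S 0).

Definition localizable (R : pzRingType) (S : R -> Prop) : Prop :=
  ~ lrel (LC S 1) (LC S 0) /\
  forall t : lterm S,
    (exists (s : {s : R | S s}) r, lrel t (LMul (LX s) (LC S r))) /\
    (exists r' (s' : {s : R | S s}), lrel t (LMul (LC S r') (LX s'))).

Definition ore_ann (R : pzRingType) (S : R -> Prop) : R -> Prop :=
  fun r => exists s t, [/\ S s, S t & s * r * t = 0].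

Fixpoint leval (R : pzRingType) (S : R -> Prop) (Q : pzRingType)
    (g : R -> Q) (y : {s : R | S s} -> Q) (t : lterm S) : Q :=
  match t with
  | LC r => g r
  | LX s => y s
  | LAdd t u => leval g y t + leval g y u
  | LOpp t => - leval g y t
  | LMul t u => leval g y t * leval g y u
  end.

(* (Q, g) is, via g : R -> Q, the left Ore localization S̄^{-1} R̄ of
   R̄ = R/a at the image S̄ of S: g vanishes on a, so g = ḡ ∘ π with
   ḡ : R̄ -> Q, and ḡ is a left ring of fractions of R̄ w.r.t. S̄:
   (i) ḡ(s̄) is a unit for s ∈ S,
   (ii) every element of Q is ḡ(s̄)^{-1} ḡ(r̄),
   (iii) ker ḡ = {r̄ : s̄ r̄ = 0 for some s ∈ S}, i.e. g r = 0 iff s r ∈ a. *)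
Definition ore_localization_mod (R : pzRingType) (S : R -> Prop)
    (Q : pzRingType) (g : {rmorphism R -> Q}) : Prop :=
  [/\ (forall r, ore_ann S r -> g r = 0),
      (forall s, S s -> exists v, v * g s = 1 /\ g s * v = 1),
      (forall q, exists s r v, [/\ S s, v * g s = 1, g s * v = 1 & q = v * g r])
    & (forall r, g r = 0 <-> exists s, S s /\ ore_ann S (s * r))].

(* R<S^{-1}> is R-isomorphic to Q (as an R-ring via g): there is an
   R-ring homomorphism R<S^{-1}> -> Q (necessarily given by evaluation,
   r |-> g r, x_s |-> y s) which is well defined on the quotient,
   injective and surjective. *)
Definition R_isomorphic_loc (R : pzRingType) (S : R -> Prop)
    (Q : pzRingType) (g : R -> Q) : Prop :=
  exists y : {s : R | S s} -> Q,
    [/\ forall t u : lterm S, lrel t u -> leval g y t = leval g y u,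
        forall t u : lterm S, leval g y t = leval g y u -> lrel t u
      & forall q : Q, exists t : lterm S, leval g y t = q].

(* Main.v *)
Require Import Defs.
From HB Require Import structures.
From mathcomp Require Import all_boot all_order all_algebra.
From mathcomp Require Import boolp.
Set Implicit Arguments. Unset Strict Implicit. Unset Printing Implicit Defensive.
Import GRing.Theory.
Local Open Scope ring_scope.

Section Quot.
Variables (R : pzRingType) (S : R -> Prop).
Definition qT := {P : lterm S -> Prop | exists t, P = lrel t}.
HB.instance Definition _ := gen_eqMixin qT.
HB.instance Definition _ := gen_choiceMixin qT.
Definition cls (t : lterm S) : qT := exist _ (lrel t) (ex_intro _ t erefl).
Definition rep (q : qT) : lterm S := projT1 (cid (proj2_sig q)).
Lemma repK q : cls (rep q) = q.
Proof.
case: q => P hP; rewrite /rep /=; case: cid => t /= e.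
rewrite /cls; move: (ex_intro _ _ _) hP; rewrite -e => h1 h2.
by congr exist; apply: Prop_irrelevance.
Qed.
Lemma clsP t u : cls t = cls u <-> lrel t u.
Proof.
split.
  move=> /(congr1 (@proj1_sig _ _)) /= e.
  have : lrel u t by rewrite -e; apply: lrel_refl.
  exact: lrel_sym.
move=> h; rewrite /cls; move: (ex_intro _ t _) (ex_intro _ u _).
have -> : lrel t = lrel u.
  apply: funext => v; apply: propext; split => h'.
    exact: lrel_trans (lrel_sym h) h'.
  exact: lrel_trans h h'.
by move=> h1 h2; congr exist; apply: Prop_irrelevance.
Qed.
Lemma rep_cls t : lrel (rep (cls t)) t.
Proof. by apply/clsP; rewrite repK. Qed.

Definition q0 := cls (LC S 0).
Definition q1 := cls (LC S 1).
Fact qkey : unit. Proof. exact: tt. Qed.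
Definition qadd := locked_with qkey (fun a b => cls (LAdd (rep a) (rep b))).
Definition qopp := locked_with qkey (fun a => cls (LOpp (rep a))).
Definition qmul := locked_with qkey (fun a b => cls (LMul (rep a) (rep b))).
Lemma qaddE t u : qadd (cls t) (cls u) = cls (LAdd t u).
Proof. rewrite /qadd unlock; by apply/clsP; apply: lrel_add; apply: rep_cls. Qed.
Lemma qmulE t u : qmul (cls t) (cls u) = cls (LMul t u).
Proof. rewrite /qmul unlock; by apply/clsP; apply: lrel_mul; apply: rep_cls. Qed.
Lemma qoppE t : qopp (cls t) = cls (LOpp t).
Proof. rewrite /qopp unlock; by apply/clsP; apply: lrel_opp; apply: rep_cls. Qed.

Ltac qind := repeat (let q := fresh "q" in move=> q; rewrite -(repK q));
  rewrite ?qaddE ?qmulE ?qoppE /q0 /q1 ?qaddE ?qmulE ?qoppE; apply/clsP.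

Lemma qaddA : associative qadd. Proof. qind; exact: lrel_addA. Qed.
Lemma qaddC : commutative qadd. Proof. qind; exact: lrel_addC. Qed.
Lemma qadd0 : left_id q0 qadd. Proof. qind; exact: lrel_add0. Qed.
Lemma qaddN : left_inverse q0 qopp qadd. Proof. qind; exact: lrel_addN. Qed.
Lemma qmulA : associative qmul. Proof. qind; exact: lrel_mulA. Qed.
Lemma qmul1 : left_id q1 qmul. Proof. qind; exact: lrel_mul1l. Qed.
Lemma qmulr1 : right_id q1 qmul. Proof. qind; exact: lrel_mul1r. Qed.
Lemma qmulDl : left_distributive qmul qadd. Proof. qind; exact: lrel_mulDl. Qed.
Lemma qmulDr : right_distributive qmul qadd. Proof. qind; exact: lrel_mulDr. Qed.

HB.instance Definition _ := GRing.isPzRing.Build qT qaddA qaddC qadd0 qaddN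
  qmulA qmul1 qmulr1 qmulDl qmulDr.

Definition g (r : R) : qT := cls (LC S r).
Lemma g_morph : monoid_morphism g.
Proof.
split; first by [].
move=> a b; rewrite /g; apply/esym; rewrite [_ * _]qmulE; apply/clsP; exact: lrel_Cmul.
Qed.
Lemma addqE t u : cls t + cls u = cls (LAdd t u). Proof. exact: qaddE. Qed.
Lemma mulqE t u : cls t * cls u = cls (LMul t u). Proof. exact: qmulE. Qed.
Lemma oppqE t : - cls t = cls (LOpp t). Proof. exact: qoppE. Qed.
Lemma gD a b : g (a + b) = g a + g b.
Proof. by rewrite /g addqE; apply/clsP/lrel_sym/lrel_Cadd. Qed.
Lemma g_add : zmod_morphism g.
Proof.
move=> a b; apply: (addIr (g b)); rewrite -gD subrK.
by rewrite addrAC -addrA subrr addr0.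
Qed.
HB.instance Definition _ := GRing.isZmodMorphism.Build R qT g g_add.
HB.instance Definition _ := GRing.isMonoidMorphism.Build R qT g g_morph.
End Quot.
Section Model.
Variables (R : pzRingType) (S : R -> Prop).
Hypothesis hS : ore_set S.
Local Notation a := (ore_ann S).

Lemma S1 : S 1. Proof. by case: hS => -[]. Qed.
Lemma S0 : ~ S 0. Proof. by case: hS => -[]. Qed.
Lemma SM s t : S s -> S t -> S (s * t). Proof. by case: hS => -[] _ _ h _; apply: h. Qed.
Lemma lore r s : S s -> exists s' r', S s' /\ s' * r = r' * s.
Proof. by move=> hs; case: hS => _ /(_ r s hs) []. Qed.
Lemma rore r s : S s -> exists s' r', S s' /\ r * s' = s * r'.
Proof. by move=> hs; case: hS => _ /(_ r s hs) []. Qed.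

Lemma a0 : a 0.
Proof. by exists 1, 1; split; [exact: S1|exact: S1|rewrite mulr0 mul0r]. Qed.
Lemma aN x : a x -> a (- x).
Proof. by case=> s [t [hs ht e]]; exists s, t; split=> //; rewrite mulrN mulNr e oppr0. Qed.
Lemma aD x y : a x -> a y -> a (x + y).
Proof.
case=> s1 [t1 [hs1 ht1 e1]]; case=> s2 [t2 [hs2 ht2 e2]].
have [u [v [hu euv]]] := lore s1 hs2.
have [w [z [hw ewz]]] := rore t1 ht2.
exists (u * s1), (t1 * w); split; [exact: SM| exact: SM|].
rewrite mulrDr mulrDl.
have -> : u * s1 * x * (t1 * w) = u * (s1 * x * t1) * w by rewrite !mulrA.
rewrite e1 mulr0 mul0r add0r ewz euv.
have -> : v * s2 * y * (t2 * z) = v * (s2 * y * t2) * z by rewrite !mulrA.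
by rewrite e2 mulr0 mul0r.
Qed.
Lemma aMl y x : a x -> a (y * x).
Proof.
case=> s [t [hs ht e]]; have [s' [r' [hs' e']]] := lore y hs.
exists s', t; split=> //.
have -> : s' * (y * x) * t = r' * (s * x * t) by rewrite mulrA e' !mulrA.
by rewrite e mulr0.
Qed.
Lemma aMr y x : a x -> a (x * y).
Proof.
case=> s [t [hs ht e]]; have [t' [r' [ht' e']]] := rore y ht.
exists s, t'; split=> //.
have -> : s * (x * y) * t' = s * x * t * r' by rewrite !mulrA -(mulrA _ y) e' !mulrA.
by rewrite e mul0r.
Qed.
Lemma a_rann s x : S s -> x * s = 0 -> a x.
Proof. by move=> hs e; exists 1, s; split=> //; [exact: S1|rewrite mul1r]. Qed.
Lemma a_cl s x : S s -> a (s * x) -> a x.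
Proof.
move=> hs [u [v [hu hv e]]]; exists (u * s), v; split=> //; first exact: SM.
by rewrite -(mulrA u s x).
Qed.
Lemma a_cr t x : S t -> a (x * t) -> a x.
Proof.
move=> ht [u [v [hu hv e]]]; exists u, (t * v); split=> //; first exact: SM.
by rewrite mulrA -(mulrA u x t).
Qed.
Lemma a1 : ~ a 1.
Proof. by case=> s [t [hs ht e]]; apply: S0; rewrite -e mulr1; exact: SM. Qed.

Definition ae x y := a (x - y).
Lemma ae_refl x : ae x x. Proof. by rewrite /ae subrr; exact: a0. Qed.
Lemma ae_eq x y : x = y -> ae x y. Proof. by move=> ->; exact: ae_refl. Qed.
Lemma ae_sym x y : ae x y -> ae y x. Proof. by rewrite /ae => h; rewrite -opprB; exact: aN. Qed.
Lemma ae_trans x y z : ae x y -> ae y z -> ae x z.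
Proof.
rewrite /ae => h1 h2; have -> : x - z = (x - y) + (y - z) by rewrite addrA subrK.
exact: aD.
Qed.
Lemma ae_add x x' y y' : ae x x' -> ae y y' -> ae (x + y) (x' + y').
Proof. by rewrite /ae opprD addrACA; exact: aD. Qed.
Lemma ae_opp x y : ae x y -> ae (- x) (- y).
Proof. by rewrite /ae => h; rewrite -opprD; exact: aN. Qed.
Lemma ae_mull z x y : ae x y -> ae (z * x) (z * y).
Proof. by rewrite /ae -mulrBr; exact: aMl. Qed.
Lemma ae_mulr z x y : ae x y -> ae (x * z) (y * z).
Proof. by rewrite /ae -mulrBl; exact: aMr. Qed.
Lemma ae_cl s x y : S s -> ae (s * x) (s * y) -> ae x y.
Proof. by rewrite /ae -mulrBr; exact: a_cl. Qed.
Lemma aK s k k' r : S s -> ae (k * s) (k' * s) -> ae (k * r) (k' * r).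
Proof. by rewrite /ae -!mulrBl => hs /(a_cr hs); exact: aMr. Qed.
Arguments aK [s k k' r].
Lemma ae_sub0 x y : ae x y -> ae (x - y) 0.
Proof. by rewrite /ae subr0. Qed.

Definition Ssub := {s : R | S s}.
Lemma lo_ex (r : R) (s : Ssub) : exists p : Ssub * R, sval p.1 * r = p.2 * sval s.
Proof.
have [s' [r' [hs' e]]] := lore r (proj2_sig s).
by exists (exist _ s' hs', r').
Qed.
Definition lo r s := projT1 (cid (lo_ex r s)).
Lemma loP r s : sval (lo r s).1 * r = (lo r s).2 * sval s.
Proof. exact: (projT2 (cid (lo_ex r s))). Qed.

Definition Pr := (Ssub * R)%type.
Definition Smul (s t : Ssub) : Ssub := exist _ (sval s * sval t) (SM (proj2_sig s) (proj2_sig t)).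
Definition Sone : Ssub := exist _ 1 S1.

Definition madd (m m' : Pr) : Pr :=
  let p := lo (sval m'.1) m.1 in (Smul p.1 m'.1, p.2 * m.2 + sval p.1 * m'.2).
Definition mopp (m : Pr) : Pr := (m.1, - m.2).
Definition mzero : Pr := (Sone, 0).
Definition mact (x : R) (m : Pr) : Pr := let p := lo x m.1 in (p.1, p.2 * m.2).
Definition minv (t : Ssub) (m : Pr) : Pr := (Smul m.1 t, m.2).

Definition eqv (m m' : Pr) := forall c c', c * sval m.1 = c' * sval m'.1 ->
  S (c * sval m.1) -> ae (c * m.2) (c' * m'.2).

Lemma eqvK (m m' : Pr) c c' : c * sval m.1 = c' * sval m'.1 -> S (c * sval m.1) ->
  ae (c * m.2) (c' * m'.2) -> eqv m m'.
Proof.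
case: m => [[s hs] r]; case: m' => [[s' hs'] r'] /=.
move=> e hcs h d d' e2 hds; rewrite /= in e2 hds *.
have [f [k [hf efk]]] := lore (d * s) hcs.
apply: (ae_cl hf).
apply: ae_trans (_ : ae _ (k * (c * r))) _.
  rewrite !mulrA; apply: (aK hs); apply: ae_eq; by rewrite -!mulrA efk.
apply: ae_trans (_ : ae _ (k * (c' * r'))) _; first exact: ae_mull h.
rewrite !mulrA; apply: (aK hs'); apply: ae_eq.
by rewrite -!mulrA -e -e2 efk.
Qed.

Arguments eqvK {m m'} c c'.
Lemma eqv_refl m : eqv m m.
Proof. by move=> c c' e _; apply: (aK (proj2_sig m.1)); exact: ae_eq. Qed.
Lemma eqv_sym m m' : eqv m m' -> eqv m' m.
Proof. by move=> h c c' e hs; apply: ae_sym; apply: h; rewrite -?e. Qed.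
Lemma eqv_trans m1 m2 m3 : eqv m1 m2 -> eqv m2 m3 -> eqv m1 m3.
Proof.
case: m1 => [[s1 hs1] r1]; case: m2 => [[s2 hs2] r2]; case: m3 => [[s3 hs3] r3] /=.
move=> h12 h23 c c' e hc.
have [f [k [hf efk]]] := lore (c * s1) hs2.
apply: (ae_cl hf).
apply: ae_trans (_ : ae _ (k * r2)) _.
  rewrite mulrA; apply: h12 => /=; first by rewrite -mulrA.
  by rewrite -mulrA; exact: SM.
rewrite mulrA; apply: h23 => /=; first by rewrite -mulrA -e.
by rewrite -efk; exact: SM.
Qed.
Arguments eqv_refl : clear implicits.
Arguments eqv_sym {m m'}.
Arguments eqv_trans {m1 m2 m3}.
Lemma madd_resp1 m1 m2 m : eqv m1 m2 -> eqv (madd m1 m) (madd m2 m).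
Proof.
case: m1 => [[s1 hs1] r1]; case: m2 => [[s2 hs2] r2]; case: m => [[t ht] u].
rewrite /madd /=.
move: (loP t (exist _ s1 hs1)); case: (lo t (exist _ s1 hs1)) => [[c hc] c'] /= e1.
move: (loP t (exist _ s2 hs2)); case: (lo t (exist _ s2 hs2)) => [[e he] e'] /= e2.
move=> h d d' /= ed hd.
rewrite !mulrDr !mulrA; apply: ae_add.
  apply: h => /=; first by rewrite -!mulrA -e1 -e2.
  by rewrite -mulrA -e1.
by apply: (aK ht); apply: ae_eq; rewrite -!mulrA.
Qed.
Arguments madd_resp1 : clear implicits.

Lemma madd_comm m m' : eqv (madd m m') (madd m' m).
Proof.
case: m => [[s hs] r]; case: m' => [[s' hs'] r'].
rewrite /madd /=.
move: (loP s' (exist _ s hs)); case: (lo s' (exist _ s hs)) => [[c hc] c'] /= e1.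
move: (loP s (exist _ s' hs')); case: (lo s (exist _ s' hs')) => [[e he] e'] /= e2.
move=> d d' /= ed hd.
rewrite !mulrDr !mulrA [d' * e' * r' + _]addrC; apply: ae_add.
  by apply: (aK hs); apply: ae_eq; rewrite -!mulrA -e1.
by apply: (aK hs'); apply: ae_eq; rewrite -!mulrA -e2.
Qed.
Arguments madd_comm : clear implicits.

Lemma madd_resp2 m m1 m2 : eqv m1 m2 -> eqv (madd m m1) (madd m m2).
Proof.
move=> h; exact: (eqv_trans (madd_comm _ _) (eqv_trans (madd_resp1 _ _ _ h) (madd_comm _ _))).
Qed.
Arguments madd_resp2 : clear implicits.

Lemma madd_resp m1 m2 m3 m4 : eqv m1 m2 -> eqv m3 m4 -> eqv (madd m1 m3) (madd m2 m4).
Proof. by move=> h1 h2; exact: (eqv_trans (madd_resp1 _ _ _ h1) (madd_resp2 _ _ _ h2)). Qed.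
Arguments madd_resp : clear implicits.

Lemma madd_assoc m1 m2 m3 : eqv (madd (madd m1 m2) m3) (madd m1 (madd m2 m3)).
Proof.
case: m1 => [[s1 hs1] r1]; case: m2 => [[s2 hs2] r2]; case: m3 => [[s3 hs3] r3].
rewrite /madd /=.
move: (loP s2 (exist _ s1 hs1)); case: (lo s2 (exist _ s1 hs1)) => [[c hc] c'] /= e1.
move: (loP s3 (Smul (exist _ c hc) (exist _ s2 hs2))).
case: (lo s3 (Smul (exist _ c hc) (exist _ s2 hs2))) => [[e he] e'] /= e2.
move: (loP s3 (exist _ s2 hs2)); case: (lo s3 (exist _ s2 hs2)) => [[f hf] f'] /= e3.
move: (loP (f * s3) (exist _ s1 hs1)); case: (lo (f * s3) (exist _ s1 hs1)) => [[h hh] h'] /= e4.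
move=> d d' /= ed hd.
rewrite !mulrDr !mulrA -addrA; apply: ae_add; [|apply: ae_add].
- by apply: (aK hs1); apply: ae_eq; rewrite -!mulrA -e4 -e1 -e2.
- by apply: (aK hs2); apply: ae_eq; rewrite -!mulrA -e2 -e3.
- by apply: (aK hs3); apply: ae_eq; rewrite -!mulrA.
Qed.
Arguments madd_assoc : clear implicits.

Lemma madd0 m : eqv (madd mzero m) m.
Proof.
case: m => [[s hs] r]; rewrite /madd /=.
move: (loP s Sone); case: (lo s Sone) => [[c hc] c'] /= e1.
move=> d d' /= ed hd.
by rewrite mulr0 add0r mulrA; apply: (aK hs); apply: ae_eq; rewrite -mulrA.
Qed.
Arguments madd0 : clear implicits.

Lemma maddN m : eqv (madd (mopp m) m) mzero.
Proof.
case: m => [[s hs] r]; rewrite /madd /mopp /=.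
move: (loP s (exist _ s hs)); case: (lo s (exist _ s hs)) => [[c hc] c'] /= e1.
move=> d d' /= ed hd.
rewrite mulr0 mulrDr !mulrN addrC !mulrA; apply: ae_sub0.
by apply: (aK hs); apply: ae_eq; rewrite -!mulrA e1.
Qed.
Arguments maddN : clear implicits.

Lemma mopp_resp m1 m2 : eqv m1 m2 -> eqv (mopp m1) (mopp m2).
Proof. by move=> h c c' e hs; rewrite /= !mulrN; apply: ae_opp; exact: h. Qed.
Arguments mopp_resp : clear implicits.

Lemma mopp_add m m' : mopp (madd m m') = madd (mopp m) (mopp m').
Proof. by case: m => [s r]; case: m' => [s' r']; rewrite /madd /mopp /= opprD !mulrN. Qed.

Lemma mact_resp x m1 m2 : eqv m1 m2 -> eqv (mact x m1) (mact x m2).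
Proof.
case: m1 => [[s1 hs1] r1]; case: m2 => [[s2 hs2] r2]; rewrite /mact /=.
move: (loP x (exist _ s1 hs1)); case: (lo x (exist _ s1 hs1)) => [[p hp] q] /= e1.
move: (loP x (exist _ s2 hs2)); case: (lo x (exist _ s2 hs2)) => [[p' hp'] q'] /= e2.
move=> h.
have [xx [xx' [hxx e0]]] := lore p hp'.
have [ee [ee' [hee e3]]] := lore s1 hs2.
have h3 : ae (ee * r1) (ee' * r2) by apply: h => //=; exact: SM.
have [z [y [hz ezy]]] := lore (xx * q) hee.
apply: (eqvK (z * xx) (z * xx')) => /=.
- by rewrite -!mulrA e0.
- by rewrite -mulrA; apply: SM => //; exact: SM.
- apply: ae_trans (_ : ae _ (y * (ee' * r2))) _.
    have -> : z * xx * (q * r1) = y * (ee * r1) by rewrite !mulrA -(mulrA z) ezy.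
    exact: ae_mull.
  rewrite mulrA (mulrA (z * xx')); apply: (aK hs2); apply: ae_eq.
  have E1 : y * ee' * s2 = z * xx * q * s1.
    by rewrite -(mulrA y) -e3 mulrA -ezy mulrA.
  rewrite E1 -(mulrA _ q) -e1 mulrA -(mulrA z) e0 mulrA -!mulrA e2.
  by [].
Qed.
Arguments mact_resp : clear implicits.

Lemma mact_add x m m' : eqv (mact x (madd m m')) (madd (mact x m) (mact x m')).
Proof.
case: m => [[s hs] r]; case: m' => [[s' hs'] r']; rewrite /madd /mact /=.
move: (loP s' (exist _ s hs)); case: (lo s' (exist _ s hs)) => [[c hc] c'] /= e1.
move: (loP x (Smul (exist _ c hc) (exist _ s' hs'))).
case: (lo x (Smul (exist _ c hc) (exist _ s' hs'))) => [[p hp] q] /= e2.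
move: (loP x (exist _ s hs)); case: (lo x (exist _ s hs)) => [[p1 hp1] q1] /= e3.
move: (loP x (exist _ s' hs')); case: (lo x (exist _ s' hs')) => [[p2 hp2] q2] /= e4.
move: (loP p2 (exist _ p1 hp1)); case: (lo p2 (exist _ p1 hp1)) => [[h hh] h'] /= e5.
move=> d d' /= ed hd.
rewrite !mulrDr !mulrA; apply: ae_add.
- apply: (aK hs); apply: ae_eq.
  have -> : d * q * c' * s = d * p * x by rewrite -!mulrA -e1 e2.
  have -> : d' * h' * q1 * s = d' * (h * p2) * x by rewrite e5 -!mulrA e3.
  by rewrite ed mulrA.
- apply: (aK hs'); apply: ae_eq.
  have -> : d * q * c * s' = d * p * x by rewrite -!mulrA e2.
  have -> : d' * h * q2 * s' = d' * (h * p2) * x by rewrite -!mulrA e4.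
  by rewrite ed.
Qed.
Arguments mact_add : clear implicits.

Lemma mactD x y m : eqv (mact (x + y) m) (madd (mact x m) (mact y m)).
Proof.
case: m => [[s hs] r]; rewrite /madd /mact /=.
move: (loP (x + y) (exist _ s hs)); case: (lo (x + y) (exist _ s hs)) => [[p hp] q] /= e0.
move: (loP x (exist _ s hs)); case: (lo x (exist _ s hs)) => [[p1 hp1] q1] /= e1.
move: (loP y (exist _ s hs)); case: (lo y (exist _ s hs)) => [[p2 hp2] q2] /= e2.
move: (loP p2 (exist _ p1 hp1)); case: (lo p2 (exist _ p1 hp1)) => [[h hh] h'] /= e3.
move=> d d' /= ed hd.
rewrite !mulrDr !mulrA -mulrDl; apply: (aK hs); apply: ae_eq.
rewrite mulrDl.
have -> : d' * h' * q1 * s = d' * h * p2 * x by rewrite -!mulrA -e1 (mulrA h') -e3 !mulrA.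
have -> : d' * h * q2 * s = d' * h * p2 * y by rewrite -!mulrA -e2.
by rewrite -mulrDr -!mulrA -e0 !mulrA ed !mulrA.
Qed.
Arguments mactD : clear implicits.

Lemma mactM x y m : eqv (mact x (mact y m)) (mact (x * y) m).
Proof.
case: m => [[s hs] r]; rewrite /mact /=.
move: (loP y (exist _ s hs)); case: (lo y (exist _ s hs)) => [[p hp] q] /= e1.
move: (loP x (exist _ p hp)); case: (lo x (exist _ p hp)) => [[p' hp'] q'] /= e2.
move: (loP (x * y) (exist _ s hs)); case: (lo (x * y) (exist _ s hs)) => [[p'' hp''] q''] /= e3.
move=> d d' /= ed hd.
rewrite !mulrA; apply: (aK hs); apply: ae_eq.
by rewrite -!mulrA -e1 -e3 !mulrA -(mulrA d q') -e2 !mulrA ed.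
Qed.
Arguments mactM : clear implicits.

Lemma mact1 m : eqv (mact 1 m) m.
Proof.
case: m => [[s hs] r]; rewrite /mact /=.
move: (loP 1 (exist _ s hs)); case: (lo 1 (exist _ s hs)) => [[p hp] q] /= e1.
move=> d d' /= ed hd.
by rewrite mulrA; apply: (aK hs); apply: ae_eq; rewrite -mulrA -e1 mulr1.
Qed.
Arguments mact1 : clear implicits.

Lemma mact0 m : eqv (mact 0 m) mzero.
Proof.
case: m => [[s hs] r]; rewrite /mact /=.
move: (loP 0 (exist _ s hs)); case: (lo 0 (exist _ s hs)) => [[p hp] q] /= e1.
move=> d d' /= ed hd.
rewrite mulr0 mulrA -(mul0r r); apply: (aK hs); apply: ae_eq.
by rewrite -mulrA -e1 !mulr0 !mul0r.
Qed.
Arguments mact0 : clear implicits.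

Lemma minv_resp t m1 m2 : eqv m1 m2 -> eqv (minv t m1) (minv t m2).
Proof.
case: m1 => [[s1 hs1] r1]; case: m2 => [[s2 hs2] r2]; case: t => [t ht]; rewrite /minv /=.
move=> h.
have [ee [ee' [hee e3]]] := lore s1 hs2.
apply: (eqvK ee ee') => /=.
- by rewrite !mulrA e3.
- by rewrite mulrA; apply: SM => //; exact: SM.
- by apply: h => //=; exact: SM.
Qed.
Arguments minv_resp : clear implicits.

Lemma minv_add t m m' : eqv (minv t (madd m m')) (madd (minv t m) (minv t m')).
Proof.
case: m => [[s hs] r]; case: m' => [[s' hs'] r']; case: t => [t ht]; rewrite /madd /minv /=.
move: (loP s' (exist _ s hs)); case: (lo s' (exist _ s hs)) => [[c hc] c'] /= e1.
move: (loP (s' * t) (Smul (exist _ s hs) (exist _ t ht))).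
case: (lo (s' * t) (Smul (exist _ s hs) (exist _ t ht))) => [[h hh] h'] /= e2.
move=> d d' /= ed hd; rewrite -!mulrA in ed.
rewrite !mulrDr !mulrA; apply: ae_add.
- apply: (aK (SM hs ht)); apply: ae_eq.
  by rewrite -!mulrA -e2 (mulrA c') -e1 -!mulrA.
- apply: (aK (SM hs' ht)); apply: ae_eq.
  by rewrite -!mulrA.
Qed.
Arguments minv_add : clear implicits.

Lemma mact_inv (t : Ssub) m : eqv (mact (sval t) (minv t m)) m.
Proof.
case: m => [[s hs] r]; case: t => [t ht]; rewrite /mact /minv /=.
move: (loP t (Smul (exist _ s hs) (exist _ t ht))).
case: (lo t (Smul (exist _ s hs) (exist _ t ht))) => [[p hp] q] /= e1.
move=> d d' /= ed hd.
rewrite mulrA; apply: (aK hs).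
have h1 : ae (q * s) p.
  rewrite /ae; apply: (a_rann ht).
  by rewrite mulrBl -mulrA -e1 subrr.
rewrite -mulrA -ed; exact: ae_mull.
Qed.
Arguments mact_inv : clear implicits.

Lemma minv_act (t : Ssub) m : eqv (minv t (mact (sval t) m)) m.
Proof.
case: m => [[s hs] r]; case: t => [t ht]; rewrite /mact /minv /=.
move: (loP t (exist _ s hs)); case: (lo t (exist _ s hs)) => [[p hp] q] /= e1.
move=> d d' /= ed hd.
by rewrite mulrA; apply: (aK hs); apply: ae_eq; rewrite -mulrA -e1.
Qed.
Arguments minv_act : clear implicits.
Opaque eqv.

Fixpoint F (t : lterm S) (m : Pr) : Pr :=
  match t with
  | LC x => mact x m
  | LX s => minv s m
  | LAdd t u => madd (F t m) (F u m)
  | LOpp t => mopp (F t m)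
  | LMul t u => F t (F u m)
  end.

Lemma madd4 m1 m2 m3 m4 :
  eqv (madd (madd m1 m2) (madd m3 m4)) (madd (madd m1 m3) (madd m2 m4)).
Proof.
refine (eqv_trans (madd_assoc _ _ _) _).
apply: eqv_trans (madd_resp2 _ _ _ (eqv_sym (madd_assoc _ _ _))) _.
apply: eqv_trans (madd_resp2 _ _ _ (madd_resp1 _ _ _ (madd_comm _ _))) _.
apply: eqv_trans (madd_resp2 _ _ _ (madd_assoc _ _ _)) _.
exact: eqv_sym (madd_assoc _ _ _).
Qed.

Lemma F_good t : (forall m m', eqv m m' -> eqv (F t m) (F t m')) /\
  (forall m m', eqv (F t (madd m m')) (madd (F t m) (F t m'))).
Proof.
elim: t => [x|s|t [IHt1 IHt2] u [IHu1 IHu2]|t [IHt1 IHt2]|t [IHt1 IHt2] u [IHu1 IHu2]] /=.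
- split; [exact: mact_resp|exact: mact_add].
- split; [exact: minv_resp|exact: minv_add].
- split; first by move=> m m' h; apply: madd_resp; [exact: IHt1|exact: IHu1].
  move=> m m'; apply: eqv_trans (madd_resp _ _ _ _ (IHt2 m m') (IHu2 m m')) _.
  exact: madd4.
- split; first by move=> m m' h; apply: mopp_resp; exact: IHt1.
  move=> m m'; rewrite -mopp_add; exact: mopp_resp.
- split; first by move=> m m' h; apply: IHt1; exact: IHu1.
  move=> m m'; apply: eqv_trans (IHt1 _ _ (IHu2 m m')) _; exact: IHt2.
Qed.

Lemma F_rel t u : lrel t u -> forall m, eqv (F t m) (F u m).
Proof.
elim=> {t u} /=.
- by move=> t m; exact: eqv_refl.
- by move=> t u _ IH m; exact: eqv_sym.
- by move=> t u v _ IH1 _ IH2 m; exact: eqv_trans (IH1 m) (IH2 m).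
- by move=> t t' u u' _ IH1 _ IH2 m; exact: madd_resp.
- by move=> t t' _ IH m; exact: mopp_resp.
- move=> t t' u u' _ IH1 _ IH2 m.
  exact: (eqv_trans (IH1 (F u m)) ((proj1 (F_good t')) _ _ (IH2 m))).
- by move=> t u v m; exact: eqv_sym (madd_assoc _ _ _).
- by move=> t u m; exact: madd_comm.
- by move=> t m; apply: eqv_trans (madd_resp1 _ _ _ (mact0 _)) _; exact: madd0.
- by move=> t m; apply: eqv_trans (maddN _) _; exact: eqv_sym (mact0 _).
- by move=> t u v m; exact: eqv_refl.
- by move=> t m; exact: mact1.
- by move=> t m; apply: (proj1 (F_good t)); exact: mact1.
- by move=> t u v m; exact: eqv_refl.
- by move=> t u v m; exact: (proj2 (F_good t)).
- by move=> x y m; exact: eqv_sym (mactD _ _ _).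
- by move=> x y m; exact: mactM.
- by move=> s m; apply: eqv_trans (mact_inv _ _) (eqv_sym (mact1 _)).
- by move=> s m; apply: eqv_trans (minv_act _ _) (eqv_sym (mact1 _)).
Qed.

Lemma ass_sub r : lrel (LC S r) (LC S 0) -> a r.
Proof.
move=> /F_rel /(_ (Sone, 1)) /=; rewrite /mact /=.
move: (loP r Sone); case: (lo r Sone) => [[p hp] q] /= e1.
move: (loP 0 Sone); case: (lo 0 Sone) => [[p0 hp0] q0] /= e0.
have [xx [xx' [hxx e2]]] := lore p hp0.
move=> /(_ xx xx' e2 (SM hxx hp)).
rewrite mulr0 mulr1 in e0; rewrite mulr1 in e1.
rewrite !mulr1 -e0 -e1 mulr0 /ae subr0 mulrA => h.
exact: a_cl (SM hxx hp) h.
Qed.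
End Model.

Section Final.
Variables (R : pzRingType) (S : R -> Prop).
Hypothesis hS : ore_set S.
Local Notation Q := (qT S).
Local Notation gg := (g S).
Definition yy (s : {s : R | S s}) : Q := cls (LX s).
Lemma oneqE : (1 : Q) = cls (LC S 1). Proof. by []. Qed.
Lemma zeroqE : (0 : Q) = cls (LC S 0). Proof. by []. Qed.

Lemma ygs s : yy s * gg (sval s) = 1.
Proof. by rewrite /yy /g mulqE oneqE; apply/clsP; exact: lrel_invr. Qed.
Lemma gys s : gg (sval s) * yy s = 1.
Proof. by rewrite /yy /g mulqE oneqE; apply/clsP; exact: lrel_invl. Qed.
Lemma yE_l u Z : Z * gg (sval u) = 1 -> Z = yy u.
Proof. by move=> h; rewrite -[Z]mulr1 -(gys u) mulrA h mul1r. Qed.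
Lemma yE_r u Z : gg (sval u) * Z = 1 -> Z = yy u.
Proof. by move=> h; rewrite -[Z]mul1r -(ygs u) -mulrA h mulr1. Qed.

Definition Sone' : {s : R | S s} := exist _ 1 (S1 hS).
Lemma yone : yy Sone' = 1.
Proof. by apply/esym/yE_l; rewrite mul1r /= rmorph1. Qed.

Lemma left_form t : exists (s : {s : R | S s}) r, cls t = yy s * gg r.
Proof.
elim: t => [x|s|t [s1 [a1 IH1]] u [s2 [b IH2]]|t [s1 [a1 IH1]]|t [s1 [a1 IH1]] u [s2 [b IH2]]].
- by exists Sone', x; rewrite yone mul1r.
- by exists s, 1; rewrite rmorph1 mulr1.
- have [s' [r' [hs' e]]] := lore hS (sval s2) (proj2_sig s1).
  pose D := exist S (s' * sval s2) (SM hS hs' (proj2_sig s2)).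
  have E1 : yy s1 = yy D * gg r'.
    apply/esym/yE_l; rewrite -mulrA -rmorphM -e; exact: (ygs D).
  have E2 : yy s2 = yy D * gg s'.
    apply/esym/yE_l; rewrite -mulrA -rmorphM; exact: (ygs D).
  exists D, (r' * a1 + s' * b).
  by rewrite -addqE IH1 IH2 E1 E2 rmorphD !rmorphM mulrDr !mulrA.
- by exists s1, (- a1); rewrite -oppqE IH1 rmorphN mulrN.
- have [s' [r' [hs' e]]] := lore hS a1 (proj2_sig s2).
  pose s'' := exist S s' hs'.
  have E : gg a1 * yy s2 = yy s'' * gg r'.
    rewrite -[gg a1 * _]mul1r -(ygs s'') /= -!mulrA (mulrA (gg s')) -rmorphM e rmorphM.
    by rewrite -(mulrA (gg r')) (gys s2) mulr1.
  pose D := exist S (s' * sval s1) (SM hS hs' (proj2_sig s1)).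
  have E2 : yy s1 * yy s'' = yy D.
    apply: yE_l; rewrite /= rmorphM -mulrA (mulrA (yy s'') (gg s')) (ygs s'') mul1r.
    exact: ygs.
  exists D, (r' * b).
  rewrite -mulqE IH1 IH2 -(mulrA (yy s1)) (mulrA (gg a1)) E -!mulrA (mulrA (yy s1)) E2.
  by rewrite rmorphM mulrA.
Qed.

Lemma right_form t : exists r (s : {s : R | S s}), cls t = gg r * yy s.
Proof.
elim: t => [x|s|t [a1 [s1 IH1]] u [b [s2 IH2]]|t [a1 [s1 IH1]]|t [a1 [s1 IH1]] u [b [s2 IH2]]].
- by exists x, Sone'; rewrite yone mulr1.
- by exists 1, s; rewrite rmorph1 mul1r.
- have [w [z [hw e]]] := rore hS (sval s2) (proj2_sig s1).
  pose D := exist S (sval s2 * w) (SM hS (proj2_sig s2) hw).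
  have E1 : yy s1 = gg z * yy D.
    apply/esym/yE_r; rewrite mulrA -rmorphM -e; exact: (gys D).
  have E2 : yy s2 = gg w * yy D.
    apply/esym/yE_r; rewrite mulrA -rmorphM; exact: (gys D).
  exists (a1 * z + b * w), D.
  by rewrite -addqE IH1 IH2 E1 E2 rmorphD !rmorphM mulrDl !mulrA.
- by exists (- a1), s1; rewrite -oppqE IH1 rmorphN mulNr.
- have [w [z [hw e]]] := rore hS b (proj2_sig s1).
  pose w' := exist S w hw.
  have E : yy s1 * gg b = gg z * yy w'.
    rewrite -[yy s1 * gg b]mulr1 -(gys w') /= mulrA -(mulrA (yy s1)) -rmorphM e rmorphM.
    by rewrite mulrA (ygs s1) mul1r.
  pose D := exist S (sval s2 * w) (SM hS (proj2_sig s2) hw).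
  have E2 : yy w' * yy s2 = yy D.
    apply: yE_r; rewrite /= rmorphM -mulrA (mulrA (gg w)) (gys w') mul1r.
    exact: gys.
  exists (a1 * z), D.
  rewrite -mulqE IH1 IH2 -(mulrA (gg a1)) (mulrA (yy s1)) E -!mulrA E2.
  by rewrite rmorphM mulrA.
Qed.

Lemma g_ann r : ore_ann S r -> gg r = 0.
Proof.
case=> s [t [hs ht e]].
have -> : gg r = yy (exist _ s hs) * gg (s * r * t) * yy (exist _ t ht).
  rewrite !rmorphM !mulrA (ygs (exist _ s hs)) mul1r -mulrA (gys (exist _ t ht)).
  by rewrite mulr1.
by rewrite e rmorph0 mulr0 mul0r.
Qed.

Lemma ev t : leval gg yy t = cls t.
Proof.
elim: t => [x|s|t IHt u IHu|t IHt|t IHt u IHu] //=; rewrite ?IHt ?IHu.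
- exact: addqE.
- exact: oppqE.
- exact: mulqE.
Qed.

Lemma final_loc : localizable S.
Proof.
split.
  by move=> h; apply: (a1 hS); exact: (ass_sub hS h).
move=> t; split.
  have [s [r e]] := left_form t; exists s, r; apply/clsP; rewrite e; exact: mulqE.
have [r [s e]] := right_form t; exists r, s; apply/clsP; rewrite e; exact: mulqE.
Qed.

Lemma final_ass r : ass S r <-> ore_ann S r.
Proof.
split; first by move=> h; exact: (ass_sub hS h).
by move=> h; apply/clsP; rewrite -zeroqE; exact: (g_ann h).
Qed.

Lemma final_exists : exists (Q : pzRingType) (g : {rmorphism R -> Q}),
  ore_localization_mod S g /\ R_isomorphic_loc S g.
Proof.
exists Q, gg; split.
  split.
  - move=> r; exact: g_ann.
  - move=> s hs; exists (yy (exist _ s hs)); split; [exact: (ygs (exist _ s hs))|exact: (gys (exist _ s hs))].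
  - move=> q; have [s [r e]] := left_form (rep q).
    exists (sval s), r, (yy s); split; [exact: (proj2_sig s)|exact: ygs|exact: gys|].
    by rewrite -e repK.
  - move=> r; split.
      move=> h; exists 1; split; first exact: (S1 hS).
      rewrite mul1r; apply: (ass_sub hS); apply/clsP; exact: h.
    case=> s [hs h]; have := g_ann h; rewrite rmorphM => h2.
    by rewrite -[X in X = 0]mul1r -(ygs (exist _ s hs)) -mulrA /= h2 mulr0.
exists yy; split.
- by move=> t u h; rewrite !ev; apply/clsP.
- by move=> t u; rewrite !ev => /clsP.
- by move=> q; exists (rep q); rewrite ev repK.
Qed.
End Final.

Theorem theorem3p1 :
  (forall (R : pzRingType) (S : R -> Prop), ore_set S -> localizable S) /\
  (forall (R : pzRingType) (S : R -> Prop), ore_set S ->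
     [/\ localizable S,
         (forall r : R, ass S r <-> ore_ann S r)
       & exists (Q : pzRingType) (g : {rmorphism R -> Q}),
           ore_localization_mod S g /\ R_isomorphic_loc S g]).
Proof.
split; first by move=> R S hS; exact: final_loc.
move=> R S hS; split; [exact: final_loc|exact: final_ass|exact: final_exists].
Qed.
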